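(* Every normal finite $C$-space is weakly infinite-dimensional in the sense of Smirnov.
   Context: A set is functionally open if it is a cozero set. $X$ is a finite $C$-space if for every sequence $\{\omega_n\}$ of finite covers of $X$ by functionally open sets there exist $k$ and finite families $\gamma_1,\dots,\gamma_k$ of pairwise disjoint functionally open sets such that each $\gamma_n$ refines $\omega_n$ and $\bigcup_{n=1}^k\gamma_n$ covers $X$. A normal space $X$ is weakly infinite-dimensional in the sense of Smirnov if for every sequence $\{(A_i,B_i)\}_{i\in\mathbb N}$ of pairs of disjoint closed subsets of $X$ there exist partitions $L_i$ between $A_i$ and $B_i$ and $k$ such that $\bigcap_{i=1}^k L_i=\emptyset$. *)

(* Defs.v *)
From HB Require Import structures.
From mathcomp Require Import all_boot all_order all_algebra.
From mathcomp Require Import all_classical all_reals all_analysis.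
From mathcomp Require Import Rstruct Rstruct_topology.
From Stdlib Require Import Reals.

Set Implicit Arguments.
Unset Strict Implicit.
Unset Printing Implicit Defensive.

Local Open Scope classical_set_scope.

Definition functionally_open {X : topologicalType} (A : set X) : Prop :=
  exists f : X -> R, continuous f /\ A = [set x | f x <> 0%R].

Definition fo_finite_cover {X : topologicalType} (m : nat) (W : nat -> set X) :=
  (forall i, (i < m)%N -> functionally_open (W i)) /\
  (forall x : X, exists2 i, (i < m)%N & W i x).

Definition finite_C_space (X : topologicalType) : Prop :=
  forall (m : nat -> nat) (W : nat -> nat -> set X),
    (forall n, fo_finite_cover (m n) (W n)) ->
    exists (k : nat) (p : nat -> nat) (G : nat -> nat -> set X),
      (* gamma_1, ..., gamma_k, here indexed by n < k *)
      (forall n, (n < k)%N ->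
         (forall i, (i < p n)%N -> functionally_open (G n i)) /\
         (forall i j, (i < p n)%N -> (j < p n)%N -> i <> j ->
            G n i `&` G n j = set0) /\
         (forall i, (i < p n)%N ->
            exists2 j, (j < m n)%N & G n i `<=` W n j)) /\
      (forall x : X, exists n i, [/\ (n < k)%N, (i < p n)%N & G n i x]).

Definition partition_between {X : topologicalType} (A B L : set X) : Prop :=
  exists U V : set X, [/\ open U /\ open V, U `&` V = set0,
    A `<=` U, B `<=` V & ~` L = U `|` V].

Definition smirnov_wid (X : topologicalType) : Prop :=
  forall A B : nat -> set X,
    (forall i, closed (A i) /\ closed (B i) /\ A i `&` B i = set0) ->
    exists (L : nat -> set X) (k : nat),
      (forall i, partition_between (A i) (B i) (L i)) /\
      (0 < k)%N /\
      [set x | forall i, (i < k)%N -> L i x] = set0.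

(* Main.v *)
Require Import Defs.
From Stdlib Require Import Reals.
From HB Require Import structures.
From mathcomp Require Import all_boot all_order all_algebra.
From mathcomp Require Import all_classical all_reals all_analysis.
From mathcomp Require Import Rstruct Rstruct_topology lra.
Local Open Scope classical_set_scope.
Local Open Scope ring_scope.
Import Order.TTheory GRing.Theory Num.Theory.

Lemma fo_open (X : topologicalType) (A : set X) : functionally_open A -> open A.
Proof.
move=> [f [cf ->]].
have -> : [set x | f x <> 0%R] = f @^-1` [set y : R | y != 0].
  by apply/seteqP; split => x /=; move/eqP.
apply: open_comp; first by move=> x _; apply: cf.
exact: open_neq.
Qed.

Lemma cont_aux (X : topologicalType) (f : X -> R) (c : R) (s : R) :
  continuous f -> continuous (fun x => (f x - c) + s * `|f x - c|).
Proof.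
move=> cf x.
have cg : continuous (fun x => f x - c).
  move=> y; apply: (@continuousD _ R^o X f (fun=> - c)); [exact: cf | exact: cvg_cst].
have ch : continuous (fun x => s * `|f x - c|).
  move=> y; apply: (@continuousM _ X (fun=> s) (fun x => `|f x - c|)); first exact: cvg_cst.
  apply: (continuous_comp (cg y)).
  exact: (@norm_continuous _ R^o).
exact: (@continuousD _ R^o X (fun x => f x - c) (fun x => s * `|f x - c|) x (cg x) (ch x)).
Qed.

Lemma fo_lt (X : topologicalType) (f : X -> R) (c : R) :
  continuous f -> functionally_open [set x | f x < c].
Proof.
move=> cf; exists (fun x => (f x - c) + (-1) * `|f x - c|); split.
  exact: cont_aux.
apply/seteqP; split => x /=; case: (ltP (f x) c) => hc //.
- rewrite ltr0_norm ?subr_lt0 // => _ H.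
  have H' : f x - c + -1 * - (f x - c) = 0 := H; lra.
- rewrite ger0_norm ?subr_ge0 // => h; exfalso; apply: h; rewrite mulN1r subrr //.
Qed.

Lemma fo_gt (X : topologicalType) (f : X -> R) (c : R) :
  continuous f -> functionally_open [set x | c < f x].
Proof.
move=> cf; exists (fun x => (f x - c) + 1 * `|f x - c|); split.
  exact: cont_aux.
apply/seteqP; split => x /=; case: (ltP c (f x)) => hc //.
- rewrite gtr0_norm ?subr_gt0 // => _ H.
  have H' : f x - c + 1 * (f x - c) = 0 := H; lra.
- rewrite ler0_norm ?subr_le0 // => h; exfalso; apply: h; rewrite mul1r subrr //.
Qed.

Theorem lemma2p3 (X : topologicalType) :
  normal_space X -> finite_C_space X -> smirnov_wid X.
Proof.
move=> nX cX A B hAB.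
have hf : forall i, exists f : X -> R, [/\ continuous f,
    f @` A i `<=` [set -1], f @` B i `<=` [set 1] & range f `<=` `[-1, 1]].
  move=> i; have [cA [cB AB]] := hAB i.
  apply: urysohn_ext_itv => //; lra.
have [F hF] := choice hf.
pose W (n j : nat) := if (j == 0)%N then [set x | F n x < 1/2] else [set x | -(1/2) < F n x].
have hW : forall n, fo_finite_cover 2 (W n).
  move=> n; have [cF _ _ _] := hF n; split.
    move=> [|[|i]] // _; rewrite /W /=; [exact: fo_lt | exact: fo_gt].
  move=> x; case: (ltP (F n x) (1/2)) => h.
    by exists 0%N.
  exists 1%N => //; rewrite /W /=; lra.
have [k [p [G [hG cov]]]] := cX (fun=> 2%N) W hW.
pose G0 (n : nat) : set X := [set x | exists i : nat, [/\ (n < k)%N, (i < p n)%N, G n i x & G n i `<=` W n 0%N]].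
pose G1 (n : nat) : set X := [set x | exists i : nat, [/\ (n < k)%N, (i < p n)%N, G n i x & ~ (G n i `<=` W n 0%N)]].
pose U (n : nat) : set X := [set x | F n x < -(1/2)] `|` G0 n.
pose V (n : nat) : set X := [set x | 1/2 < F n x] `|` G1 n.
exists (fun n => ~` (U n `|` V n)), k.+1; split; last split => //.
  move=> i; have [cF fA fB _] := hF i.
  exists (U i), (V i); split.
  - split.
    + apply: openU.
        apply: (@open_comp _ _ (F i) [set y | y < -(1/2)]); [move=> x _; exact: cF| exact: open_lt].
      have -> : G0 i = \bigcup_(j in [set j | (i < k)%N /\ (j < p i)%N /\ G i j `<=` W i 0%N]) G i j.
        apply/seteqP; split => x /=.
          by move=> [j [? ? ? ?]]; exists j.
        by move=> [j [? [? ?]] ?]; exists j.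
      apply: bigcup_open => j [ik [jp _]]; apply: fo_open.
      have [h _] := hG i ik; exact: h.
    + apply: openU.
        apply: (@open_comp _ _ (F i) [set y | 1/2 < y]); [move=> x _; exact: cF| exact: open_gt].
      have -> : G1 i = \bigcup_(j in [set j | (i < k)%N /\ (j < p i)%N /\ ~ (G i j `<=` W i 0%N)]) G i j.
        apply/seteqP; split => x /=.
          by move=> [j [? ? ? ?]]; exists j.
        by move=> [j [? [? ?]] ?]; exists j.
      apply: bigcup_open => j [ik [jp _]]; apply: fo_open.
      have [h _] := hG i ik; exact: h.
  - apply/seteqP; split => // x [[h1|[j [ik jp Gj sj]]] [h2|[j' [ik' jp' Gj' nsj']]]] /=.
    + move: h1 h2 => /= h1 h2. lra.
    + have [_ [_ ref]] := hG i ik'; have [jj jj2 sub] := ref j' jp'.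
      case: jj jj2 sub => [|[|jj]] // _ sub.
      have := sub x Gj'; rewrite /W /=; move: h1 => /= h1; lra.
    + have := sj x Gj; rewrite /W /=; move: h2 => /= h2; lra.
    + case: (eqVneq j j') => [ejj|njj].
        by subst j'; apply: nsj'.
      have [_ [disj _]] := hG i ik.
      have := disj j j' jp jp' (elimN eqP njj).
      by move=> /seteqP [+ _] => /(_ x (conj Gj Gj')).
  - move=> x Ax; left; have : F i x = -1 by apply: fA; exists x.
    rewrite /=; lra.
  - move=> x Bx; left; have : F i x = 1 by apply: fB; exists x.
    rewrite /=; lra.
  - by rewrite setCK.
apply/seteqP; split => // x /= hx.
have [n [j [nk jp Gx]]] := cov x.
apply: (hx n (ltnW nk)).
case: (pselect (G n j `<=` W n 0%N)) => s.
  by left; right; exists j.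
by right; right; exists j.
Qed.
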